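(* Let $g(x)=\sum_{k=0}^\infty a_k x^k$ be a real power series convergent for $x\in(-\varrho,\varrho)$, some $\varrho\in(0,\infty)$, put $G(y)=g(1/y)$, and let $c\in\mathbb{R}$. Then for every real $y$ with $y+c>1+\max\{1,1/\varrho\}$, $$(y+1)G(y+c)-yG(y+c-1)=a_0+\sum_{k=2}^\infty\frac{c\sum_{i=1}^{k-1}\binom{k-1}{i-1}a_i-\Bigl(\sum_{i=1}^{k-1}\binom{k}{i-1}a_i+\bigl(\binom{k}{k-1}-1\bigr)a_k\Bigr)}{(y+c)^k},$$ the series being convergent. Consequently $\lim_{y\to\infty}\bigl((y+1)G(y+c)-yG(y+c-1)\bigr)=a_0$. In particular, for every $c\in\mathbb{R}$, $$\lim_{n\to\infty}\Bigl((n+1)\Bigl(1+\frac1{n+c}\Bigr)^{n+c}-n\Bigl(1+\frac1{n+c-1}\Bigr)^{n+c-1}\Bigr)=\mathrm{e}.$$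
   Context: $\mathrm{e}$ is the base of the natural logarithm; the special case corresponds to $g(x)=(1+x)^{1/x}$ (with value $\mathrm{e}$ at $0$), whose Maclaurin series converges on $(-1,1)$ and has constant term $\mathrm{e}$, so that $G(y)=(1+1/y)^y$. *)

(* Defs.v *)
From Stdlib Require Import Reals ClassicalEpsilon.
Open Scope R_scope.

(* Sum of the power series sum_k a_k x^k (a chosen limit when it converges;
   an arbitrary value otherwise). *)
Definition psum (a : nat -> R) (x : R) : R :=
  epsilon (inhabits 0) (fun l => Pser a x l).

Definition gfun (a : nat -> R) (x : R) : R := psum a x.
Definition Gfun (a : nat -> R) (y : R) : R := gfun a (/ y).

(* Numerator of the k-th term, k = m + 2:
   c * sum_{i=1}^{k-1} C(k-1,i-1) a_i
   - ( sum_{i=1}^{k-1} C(k,i-1) a_i + (C(k,k-1) - 1) a_k ),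
   with i = j + 1, j = 0..m. *)
Definition coefD (a : nat -> R) (c : R) (m : nat) : R :=
  c * sum_f_R0 (fun j => C (S m) j * a (S j)) m
  - (sum_f_R0 (fun j => C (S (S m)) j * a (S j)) m
     + (C (S (S m)) (S m) - 1) * a (S (S m))).

Definition Ffun (a : nat -> R) (c y : R) : R :=
  (y + 1) * Gfun a (y + c) - y * Gfun a (y + c - 1).

(* Main.v *)
Require Import Defs.
From Stdlib Require Import Reals.
Open Scope R_scope.
From Stdlib Require Import Lra Lia Arith ZArith ClassicalEpsilon.
From Coquelicot Require Import Coquelicot.
Open Scope R_scope.
Local Notation C := Binomial.C (only parsing).

Lemma C_nonneg n k : 0 <= C n k.
Proof.
  unfold C. apply Rmult_le_pos. apply pos_INR.
  left; apply Rinv_0_lt_compat. apply Rmult_lt_0_compat; apply lt_0_INR, lt_O_fact.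
Qed.

Definition nbT (k : nat) (u : R) (M : nat) : R :=
  sum_f_R0 (fun j => C (k + j) k * u ^ j) M.

Lemma nbT_rec0 u M : (1 - u) * nbT 0 u M = 1 - u ^ S M.
Proof.
  induction M as [|M IH].
  - unfold nbT; simpl. rewrite C_n_n. ring.
  - unfold nbT in *. rewrite tech5. rewrite Rmult_plus_distr_l, IH.
    simpl (0 + S M)%nat. rewrite C_n_0. simpl. ring.
Qed.

Lemma nbT_rec k u M :
  (1 - u) * nbT (S k) u M = nbT k u M - C (S k + M) (S k) * u ^ S M.
Proof.
  induction M as [|M IH].
  - unfold nbT; simpl. rewrite !Nat.add_0_r, !C_n_n. ring.
  - unfold nbT in *. rewrite !tech5. rewrite Rmult_plus_distr_l, IH.
    assert (P := pascal (k + S M) k ltac:(lia)).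
    replace (S (k + S M)) with (S k + S M)%nat in P by lia.
    replace (k + S M)%nat with (S k + M)%nat in P at 2 by lia.
    rewrite <- P. simpl pow. ring.
Qed.

Lemma nbT_nonneg k u M : 0 <= u -> 0 <= nbT k u M.
Proof.
  intros Hu. unfold nbT. induction M as [|M IH]; simpl.
  - rewrite Rmult_1_r; apply C_nonneg.
  - apply Rplus_le_le_0_compat; auto. apply Rmult_le_pos. apply C_nonneg. apply (pow_le u (S M)); auto.
Qed.

Lemma lim_shift (s : nat -> R) l k : Un_cv s l -> Un_cv (fun N => s (N + k)%nat) l.
Proof.
  intros H eps He. destruct (H eps He) as [N HN]. exists N. intros n Hn. apply HN. lia.
Qed.

Lemma lim_shift_sub (s : nat -> R) l k : Un_cv s l -> Un_cv (fun N => s (N - k)%nat) l.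
Proof.
  intros H eps He. destruct (H eps He) as [N HN]. exists (N + k)%nat. intros n Hn. apply HN. lia.
Qed.

Lemma geom_cv u : 0 <= u < 1 -> Un_cv (fun n => u ^ n) 0.
Proof.
  intros Hu eps He. destruct (pow_lt_1_zero u ltac:(rewrite Rabs_pos_eq; lra) eps He) as [N HN].
  exists N. intros n Hn. unfold Rdist. rewrite Rminus_0_r. apply HN. auto.
Qed.

Lemma cv_const x : Un_cv (fun _ => x) x.
Proof. intros eps He. exists 0%nat. intros n _. unfold Rdist. rewrite Rminus_eq_0, Rabs_R0. lra. Qed.

Lemma NB u : 0 <= u < 1 -> forall k,
  (forall M, nbT k u M <= / (1 - u) ^ S k) /\ Un_cv (nbT k u) (/ (1 - u) ^ S k).
Proof.
  intros Hu k. assert (H1u : 0 < 1 - u) by lra.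
  induction k as [|k [IHb IHc]].
  - assert (E : forall M, nbT 0 u M = (1 - u ^ S M) / (1 - u)).
    { intros M. rewrite <- nbT_rec0. field. lra. }
    split.
    + intros M. rewrite E. rewrite pow_1.
      unfold Rdiv. rewrite <- (Rmult_1_l (/ (1 - u))) at 2. apply Rmult_le_compat_r. left; apply Rinv_0_lt_compat; lra.
      assert (0 <= u ^ S M) by (apply pow_le; lra). lra.
    + rewrite pow_1.
      intros eps He. 
      assert (Hg := lim_shift _ _ 1 (geom_cv u Hu)).
      assert (He' : eps * (1 - u) > 0) by (apply Rmult_lt_0_compat; lra).
      destruct (Hg _ He') as [N HN]. exists N. intros n Hn.
      specialize (HN n Hn). rewrite E. unfold Rdist in *.
      replace ((1 - u ^ S n) / (1 - u) - / (1 - u)) with (- (u ^ (n + 1)) / (1 - u)).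
      2:{ rewrite Nat.add_1_r. field. lra. }
      rewrite Rminus_0_r in HN. unfold Rdiv. rewrite Rabs_mult, Rabs_Ropp.
      rewrite (Rabs_pos_eq (/ (1-u))) by (left; apply Rinv_0_lt_compat; lra).
      apply Rmult_lt_reg_r with (1 - u). lra. rewrite Rmult_assoc, Rinv_l by lra. lra.
  - assert (E : forall M, nbT (S k) u M = (nbT k u M - C (S k + M) (S k) * u ^ S M) / (1 - u)).
    { intros M. rewrite <- nbT_rec. field. lra. }
    assert (Hpos : forall M, 0 <= C (S k + M) (S k) * u ^ S M).
    { intros M. apply Rmult_le_pos. apply C_nonneg. apply pow_le; lra. }
    assert (Hb : forall M, nbT (S k) u M <= / (1 - u) ^ S (S k)).
    { intros M. rewrite E. specialize (IHb M). specialize (Hpos M).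
      replace (/ (1 - u) ^ S (S k)) with (/ (1 - u) ^ S k / (1 - u)).
      2:{ simpl. field. split; [apply pow_nonzero|]; lra. }
      unfold Rdiv. apply Rmult_le_compat_r. left; apply Rinv_0_lt_compat; lra. lra. }
    split; [exact Hb|].
    assert (Hinc : forall M, nbT (S k) u M <= nbT (S k) u (S M)).
    { intros M. unfold nbT. rewrite tech5.
      assert (0 <= C (S k + S M) (S k) * u ^ S M) by (apply Rmult_le_pos; [apply C_nonneg| apply pow_le; lra]).
      lra. }
    destruct (ex_finite_lim_seq_incr _ _ Hinc Hb) as [L HL].
    apply is_lim_seq_Reals in HL.
    assert (Ht : Un_cv (fun M => C (S k + M) (S k) * u ^ S M) 0).
    { assert (Hd : Un_cv (fun M => nbT (S k) u (S M) - nbT (S k) u M) 0).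
      { replace 0 with (L - L) by ring. apply CV_minus.
        - apply (lim_shift _ _ 1) in HL. intros eps He. destruct (HL eps He) as [N HN].
          exists N. intros n Hn. specialize (HN n Hn). rewrite Nat.add_1_r in HN. exact HN.
        - exact HL. }
      intros eps He. destruct (Hd eps He) as [N HN]. exists (S N). intros n Hn.
      destruct n as [|n]. lia. specialize (HN n ltac:(lia)).
      unfold Rdist in *. rewrite Rminus_0_r in *. unfold nbT in HN. rewrite tech5 in HN.
      replace (sum_f_R0 (fun j : nat => C (S k + j) (S k) * u ^ j) n +
               C (S k + S n) (S k) * u ^ S n -
               sum_f_R0 (fun j : nat => C (S k + j) (S k) * u ^ j) n)
        with (C (S k + S n) (S k) * u ^ S n) in HN by ring.
      rewrite Rabs_pos_eq in *; try apply Hpos.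
      2:{ apply Rmult_le_pos; [apply C_nonneg| apply pow_le; lra]. }
      replace (u ^ S (S n)) with (u * u ^ S n) by (simpl; ring).
      apply Rle_lt_trans with (C (S k + S n) (S k) * u ^ S n); auto.
      rewrite <- Rmult_assoc, (Rmult_comm _ u), Rmult_assoc.
      assert (0 <= C (S k + S n) (S k) * u ^ S n) by (apply Rmult_le_pos; [apply C_nonneg| apply pow_le; lra]).
      nra. }
    assert (Hl := CV_minus _ _ _ _ IHc Ht).
    assert (Hl2 := CV_mult _ _ _ _ Hl (cv_const (/ (1 - u)))).
    replace (/ (1 - u) ^ S (S k)) with ((/ (1 - u) ^ S k - 0) * / (1 - u)).
    2:{ simpl. field. split; [apply pow_nonzero|]; lra. }
    intros eps He. destruct (Hl2 eps He) as [N HN]. exists N. intros n Hn.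
    rewrite E. apply HN. auto.
Qed.


Lemma swap_sum (f : nat -> nat -> R) N :
  sum_f_R0 (fun n => sum_f_R0 (fun k => f k (n - k)%nat) n) N =
  sum_f_R0 (fun k => sum_f_R0 (fun j => f k j) (N - k)) N.
Proof.
  induction N as [|N IH].
  - simpl. reflexivity.
  - rewrite tech5, IH. rewrite (tech5 (fun k => sum_f_R0 (fun j => f k j) (S N - k))).
    rewrite tech5. rewrite Nat.sub_diag. simpl (sum_f_R0 _ 0).
    replace (sum_f_R0 (fun k : nat => sum_f_R0 (fun j : nat => f k j) (S N - k)) N)
      with (sum_f_R0 (fun k => sum_f_R0 (fun j : nat => f k j) (N - k) + f k (S N - k)%nat) N).
    + rewrite plus_sum. ring.
    + apply sum_eq. intros i Hi. replace (S N - i)%nat with (S (N - i)) by lia.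
      rewrite tech5. reflexivity.
Qed.

Lemma tail_bound (g : nat -> R) Mb q K d : 0 <= q < 1 ->
  (forall k, Rabs (g k) <= Mb * q ^ k) ->
  Rabs (sum_f_R0 g (K + d) - sum_f_R0 g K) <= Mb * q ^ S K * (1 - q ^ d) / (1 - q).
Proof.
  intros Hq Hg. induction d as [|d IH].
  - rewrite Nat.add_0_r, Rminus_eq_0, Rabs_R0. simpl. right; field. lra.
  - rewrite Nat.add_succ_r, tech5.
    replace (sum_f_R0 g (K + d) + g (S (K + d)) - sum_f_R0 g K)
      with ((sum_f_R0 g (K + d) - sum_f_R0 g K) + g (S (K + d))) by ring.
    eapply Rle_trans. apply Rabs_triang.
    specialize (Hg (S (K + d))).
    replace (Mb * q ^ S K * (1 - q ^ S d) / (1 - q))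
      with (Mb * q ^ S K * (1 - q ^ d) / (1 - q) + Mb * q ^ S (K + d)).
    + lra.
    + replace (S (K + d)) with (S K + d)%nat by lia. rewrite pow_add. simpl. field. lra.
Qed.

Lemma fin_cv (f : nat -> nat -> R) K :
  (forall k, Un_cv (fun N => f k N) 0) -> Un_cv (fun N => sum_f_R0 (fun k => f k N) K) 0.
Proof.
  intros H. induction K as [|K IH].
  - simpl. apply H.
  - replace 0 with (0 + 0) by ring.
    intros eps He. destruct (CV_plus _ _ _ _ IH (H (S K)) eps He) as [N HN].
    exists N. intros n Hn. rewrite tech5. apply HN; auto.
Qed.

Lemma tannery (f : nat -> nat -> R) Mb q : 0 <= q < 1 ->
  (forall k N, Rabs (f k N) <= Mb * q ^ k) ->
  (forall k, Un_cv (fun N => f k N) 0) ->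
  Un_cv (fun N => sum_f_R0 (fun k => f k N) N) 0.
Proof.
  intros Hq Hb Hc eps He.
  assert (HM : 0 <= Mb).
  { specialize (Hb 0%nat 0%nat). simpl in Hb. pose proof (Rabs_pos (f 0%nat 0%nat)). lra. }
  assert (Hy : eps * (1 - q) / (2 * (Mb + 1)) > 0).
  { apply Rdiv_lt_0_compat. apply Rmult_lt_0_compat; lra. lra. }
  destruct (pow_lt_1_zero q ltac:(rewrite Rabs_pos_eq; lra) _ Hy) as [K HK].
  destruct (fin_cv f K Hc (eps / 2) ltac:(lra)) as [N1 HN1].
  exists (N1 + K)%nat. intros n Hn.
  specialize (HN1 n ltac:(lia)). unfold Rdist in *. rewrite Rminus_0_r in *.
  assert (Ht := tail_bound (fun k => f k n) Mb q K (n - K) Hq (fun k => Hb k n)).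
  replace (K + (n - K))%nat with n in Ht by lia.
  assert (HqK := HK (S K) ltac:(lia)). rewrite Rabs_pos_eq in HqK by (apply pow_le; lra).
  assert (Hqd : 0 <= q ^ (n - K)) by (apply pow_le; lra).
  assert (Hq1 : 0 <= q ^ S K) by (apply pow_le; lra).
  assert (Mb * q ^ S K * (1 - q ^ (n - K)) / (1 - q) <= eps / 2).
  { apply Rle_trans with (Mb * q ^ S K / (1 - q)).
    - unfold Rdiv. apply Rmult_le_compat_r. left; apply Rinv_0_lt_compat; lra.
      assert (0 <= Mb * q ^ S K) by (apply Rmult_le_pos; lra). nra.
    - apply Rle_trans with (Mb * (eps * (1 - q) / (2 * (Mb + 1))) / (1 - q)).
      + unfold Rdiv. apply Rmult_le_compat_r. left; apply Rinv_0_lt_compat; lra.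
        apply Rmult_le_compat_l; lra.
      + replace (Mb * (eps * (1 - q) / (2 * (Mb + 1))) / (1 - q)) with (eps / 2 * (Mb / (Mb + 1))) by (field; lra).
        assert (Mb / (Mb + 1) <= 1).
        { apply Rmult_le_reg_r with (Mb + 1). lra. unfold Rdiv. rewrite Rmult_assoc, Rinv_l by lra. lra. }
        nra. }
  replace (sum_f_R0 (fun k => f k n) n) with
    ((sum_f_R0 (fun k => f k n) n - sum_f_R0 (fun k => f k n) K) + sum_f_R0 (fun k => f k n) K) by ring.
  eapply Rle_lt_trans. apply Rabs_triang. lra.
Qed.


Definition bS (a : nat -> R) (n : nat) : R := sum_f_R0 (fun k => C n k * a (S k)) n.

Lemma step1 a u N :
  sum_f_R0 (fun n => bS a n * u ^ S n) N =
  sum_f_R0 (fun k => a (S k) * u ^ S k * nbT k u (N - k)) N.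
Proof.
  set (f := fun k j => a (S k) * u ^ S k * (C (k + j) k * u ^ j)).
  transitivity (sum_f_R0 (fun n => sum_f_R0 (fun k => f k (n - k)%nat) n) N).
  - apply sum_eq. intros n Hn. unfold bS. rewrite Rmult_comm, scal_sum.
    apply sum_eq. intros k Hk. unfold f. replace (k + (n - k))%nat with n by lia.
    replace (S n) with (S k + (n - k))%nat by lia. rewrite pow_add. ring.
  - rewrite swap_sum. apply sum_eq. intros k Hk. unfold f, nbT.
    rewrite scal_sum. apply sum_eq. intros; ring.
Qed.

Lemma euler a u lw Mb q : 0 < u < 1 -> 0 <= q < 1 ->
  (forall k, Rabs (a k) * (u / (1 - u)) ^ k <= Mb * q ^ k) ->
  Un_cv (fun N => sum_f_R0 (fun k => a (S k) * (u / (1 - u)) ^ S k) N) lw ->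
  Un_cv (fun N => sum_f_R0 (fun n => bS a n * u ^ S n) N) lw.
Proof.
  intros Hu Hq Hb Hl.
  set (w := u / (1 - u)) in *.
  assert (Hw : forall k, w ^ k = u ^ k * / (1 - u) ^ k).
  { intros k. unfold w, Rdiv. rewrite Rpow_mult_distr, pow_inv. reflexivity. }
  assert (HM : 0 <= Mb).
  { specialize (Hb 0%nat). simpl in Hb. pose proof (Rabs_pos (a 0%nat)). lra. }
  set (f2 := fun k N => a (S k) * (w ^ S k - u ^ S k * nbT k u (N - k))).
  assert (Hsum : forall N, sum_f_R0 (fun n => bS a n * u ^ S n) N =
     sum_f_R0 (fun k => a (S k) * w ^ S k) N - sum_f_R0 (fun k => f2 k N) N).
  { intros N. rewrite step1, <- minus_sum. apply sum_eq. intros k Hk. unfold f2. ring. }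
  assert (Hf : Un_cv (fun N => sum_f_R0 (fun k => f2 k N) N) 0).
  { apply (tannery f2 Mb q Hq).
    - intros k N. unfold f2.
      destruct (NB u ltac:(lra) k) as [Hnb _].
      specialize (Hnb (N - k)%nat).
      assert (H0 := nbT_nonneg k u (N - k) ltac:(lra)).
      assert (Hpu : 0 <= u ^ S k) by (apply pow_le; lra).
      assert (0 <= w ^ S k - u ^ S k * nbT k u (N - k) <= w ^ S k).
      { rewrite Hw. split. 
        - assert (u ^ S k * nbT k u (N - k) <= u ^ S k * / (1 - u) ^ S k) by (apply Rmult_le_compat_l; auto). lra.
        - assert (0 <= u ^ S k * nbT k u (N - k)) by (apply Rmult_le_pos; auto). lra. }
      rewrite Rabs_mult, (Rabs_pos_eq (_ - _)) by lra.
      apply Rle_trans with (Rabs (a (S k)) * w ^ S k).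
      + apply Rmult_le_compat_l. apply Rabs_pos. lra.
      + eapply Rle_trans. apply Hb. simpl. 
        assert (0 <= q ^ k) by (apply pow_le; lra).
        assert (0 <= Mb * q ^ k) by (apply Rmult_le_pos; lra). nra.
    - intros k. destruct (NB u ltac:(lra) k) as [_ Hc].
      apply (lim_shift_sub _ _ k) in Hc.
      assert (H1 := CV_mult _ _ _ _ (cv_const (u ^ S k)) Hc).
      assert (H2 := CV_minus _ _ _ _ (cv_const (w ^ S k)) H1).
      assert (H3 := CV_mult _ _ _ _ (cv_const (a (S k))) H2).
      rewrite Hw in H3. replace (a (S k) * (u ^ S k * / (1 - u) ^ S k - u ^ S k * / (1 - u) ^ S k)) with 0 in H3 by ring.
      intros eps He. destruct (H3 eps He) as [N HN]. exists N. intros n Hn.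
      unfold f2. rewrite Hw. apply HN; auto. }
  assert (H := CV_minus _ _ _ _ Hl Hf). rewrite Rminus_0_r in H.
  intros eps He. destruct (H eps He) as [N HN]. exists N. intros n Hn.
  rewrite Hsum. apply HN; auto.
Qed.


Lemma psum_eq a x l : Pser a x l -> psum a x = l.
Proof.
  intros H. unfold psum. apply (uniqueness_sum (fun n => a n * x ^ n)).
  - apply (epsilon_spec (inhabits 0) (fun l => Pser a x l)). exists l; exact H.
  - exact H.
Qed.

Lemma bound_coef a r l : 0 <= r -> Pser a r l -> exists Mr, forall k, Rabs (a k) * r ^ k <= Mr.
Proof.
  intros Hr H.
  assert (Hs : ex_series (fun n => a n * r ^ n)).
  { exists l. apply is_series_Reals. exact H. }
  apply ex_series_lim_0 in Hs. apply is_lim_seq_Reals in Hs.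
  destruct (maj_by_pos _ (exist _ 0 Hs)) as [Mr [_ HM]].
  exists Mr. intros k. specialize (HM k). rewrite Rabs_mult, (Rabs_pos_eq (r ^ k)) in HM by (apply pow_le; lra).
  exact HM.
Qed.

Lemma coef_id a c m :
  coefD a c m = a (S (S (S m))) - bS a (S (S m)) + (1 - c) * a (S (S m)) + c * bS a (S m).
Proof.
  unfold coefD, bS. rewrite (tech5 _ (S m)), (tech5 _ m), (tech5 (fun k => C (S m) k * a (S k)) m).
  rewrite !C_n_n. ring.
Qed.

Definition Su a u N := sum_f_R0 (fun n => a n * u ^ n) N.
Definition Sw a u N := sum_f_R0 (fun n => bS a n * u ^ S n) N.

Lemma partial_id a c z N : z <> 0 ->
  sum_f_R0 (fun m => coefD a c m * (/ z) ^ S (S m)) N =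
  z * (Su a (/ z) (S (S (S N))) - a 0%nat) - z * Sw a (/ z) (S (S N))
  + (1 - c) * Su a (/ z) (S (S N)) + c * (a 0%nat + Sw a (/ z) (S N)) - a 0%nat.
Proof.
  intros Hz. induction N as [|N IH].
  - unfold Su, Sw, bS. simpl. rewrite coef_id. unfold bS. simpl.
    rewrite !C_n_0, !C_n_n. field. exact Hz.
  - rewrite tech5, IH. unfold Su, Sw. rewrite !(tech5 _ (S (S (S N)))), !(tech5 _ (S (S N))), !(tech5 _ (S N)).
    rewrite coef_id. simpl pow. field. exact Hz.
Qed.


Lemma cv_lin (s1 s2 s3 s4 : nat -> R) l1 l2 l3 l4 z c a0 :
  Un_cv s1 l1 -> Un_cv s2 l2 -> Un_cv s3 l3 -> Un_cv s4 l4 ->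
  Un_cv (fun N => z * (s1 N - a0) - z * s2 N + (1 - c) * s3 N + c * (a0 + s4 N) - a0)
        (z * (l1 - a0) - z * l2 + (1 - c) * l3 + c * (a0 + l4) - a0).
Proof.
  intros H1 H2 H3 H4.
  apply CV_minus; [|apply cv_const].
  apply CV_plus; [apply CV_plus; [apply CV_minus|]|].
  - apply CV_mult; [apply cv_const|]. apply CV_minus; auto. apply cv_const.
  - apply CV_mult; [apply cv_const|]; auto.
  - apply CV_mult; [apply cv_const|]; auto.
  - apply CV_mult; [apply cv_const|]. apply CV_plus; auto. apply cv_const.
Qed.

Lemma part1a (a : nat -> R) (rho c : R) :
    0 < rho ->
    (forall x, Rabs x < rho -> exists l, Pser a x l) ->
    (forall y, y + c > 1 + Rmax 1 (/ rho) ->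
       infinite_sum (fun m => coefD a c m / (y + c) ^ (S (S m)))
                    (Ffun a c y - a 0%nat)).
Proof.
  intros Hrho Hconv y Hy.
  assert (Hm1 := Rmax_l 1 (/ rho)). assert (Hm2 := Rmax_r 1 (/ rho)).
  set (z := y + c) in *.
  assert (Hz : 2 < z) by lra.
  set (u := / z). set (w := / (z - 1)).
  assert (Hu : 0 < u) by (apply Rinv_0_lt_compat; lra).
  assert (Hu1 : u < 1 / 2).
  { unfold u. apply Rmult_lt_reg_r with z. lra. rewrite Rinv_l by lra. lra. }
  assert (Hw0 : 0 < w) by (apply Rinv_0_lt_compat; lra).
  assert (Huw : u / (1 - u) = w) by (unfold u, w; field; lra).
  assert (Huw2 : u < w).
  { unfold u, w. apply Rinv_lt_contravar. apply Rmult_lt_0_compat; lra. lra. }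
  assert (Hwr : w < rho).
  { unfold w. apply Rmult_lt_reg_r with (z - 1). lra. rewrite Rinv_l by lra.
    assert (/ rho * rho = 1) by (field; lra).
    assert (z - 1 - / rho > 0) by lra. nra. }
  destruct (Hconv u ltac:(rewrite Rabs_pos_eq; lra)) as [gu Hgu].
  destruct (Hconv w ltac:(rewrite Rabs_pos_eq; lra)) as [gw Hgw].
  set (r := (w + rho) / 2).
  destruct (Hconv r ltac:(unfold r; rewrite Rabs_pos_eq; lra)) as [gr Hgr].
  destruct (bound_coef a r gr ltac:(unfold r; lra) Hgr) as [Mr HMr].
  set (q := w / r).
  assert (Hq : 0 <= q < 1).
  { unfold q, r. split. apply Rlt_le, Rdiv_lt_0_compat; lra.
    apply Rmult_lt_reg_r with ((w + rho)/2). lra. unfold Rdiv. rewrite Rmult_assoc, Rinv_l by lra. lra. }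
  assert (Hb : forall k, Rabs (a k) * (u / (1 - u)) ^ k <= Mr * q ^ k).
  { intros k. rewrite Huw. replace w with (r * q) by (unfold q, r; field; lra).
    rewrite Rpow_mult_distr, <- Rmult_assoc. apply Rmult_le_compat_r. apply pow_le; lra. apply HMr. }
  assert (Hlw : Un_cv (fun N => sum_f_R0 (fun k => a (S k) * (u / (1 - u)) ^ S k) N) (gw - a 0%nat)).
  { rewrite Huw. intros eps He. destruct (Hgw eps He) as [N HN]. exists N. intros n Hn.
    specialize (HN (S n) ltac:(lia)). rewrite decomp_sum in HN by lia. simpl pred in HN.
    unfold Rdist in *. rewrite pow_O, Rmult_1_r in HN.
    replace (sum_f_R0 (fun k : nat => a (S k) * w ^ S k) n - (gw - a 0%nat))
      with (a 0%nat + sum_f_R0 (fun i : nat => a (S i) * w ^ S i) n - gw) by ring. exact HN. }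
  assert (Heu := euler a u (gw - a 0%nat) Mr q ltac:(lra) Hq Hb Hlw).
  assert (HF : Ffun a c y = (z - c + 1) * gu - (z - c) * gw).
  { unfold Ffun, Gfun, gfun. fold z.
    replace (psum a (/ z)) with gu by (symmetry; apply psum_eq; exact Hgu).
    replace (psum a (/ (z - 1))) with gw by (symmetry; apply psum_eq; exact Hgw).
    unfold z; ring. }
  assert (HSu : Un_cv (Su a u) gu) by exact Hgu.
  assert (HSw : Un_cv (Sw a u) (gw - a 0%nat)) by exact Heu.
  assert (Hlim := cv_lin _ _ _ _ _ _ _ _ z c (a 0%nat)
    (lim_shift _ _ 3 HSu) (lim_shift _ _ 2 HSw) (lim_shift _ _ 2 HSu) (lim_shift _ _ 1 HSw)).
  intros eps He. destruct (Hlim eps He) as [N HN]. exists N. intros n Hn.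
  specialize (HN n Hn).
  replace (sum_f_R0 (fun m : nat => coefD a c m / z ^ S (S m)) n)
    with (sum_f_R0 (fun m : nat => coefD a c m * (/ z) ^ S (S m)) n).
  2:{ apply sum_eq. intros; unfold Rdiv; rewrite pow_inv; ring. }
  rewrite partial_id by lra. fold u.
  replace (Ffun a c y - a 0%nat) with
    (z * (gu - a 0%nat) - z * (gw - a 0%nat) + (1 - c) * gu + c * (a 0%nat + (gw - a 0%nat)) - a 0%nat)
    by (rewrite HF; ring).
  replace (S (S (S n))) with (n + 3)%nat by lia. replace (S (S n)) with (n + 2)%nat by lia.
  replace (S n) with (n + 1)%nat by lia. exact HN.
Qed.


Lemma sum_le_mono (f : nat -> R) m n : (forall i, 0 <= f i) -> (m <= n)%nat ->
  sum_f_R0 f m <= sum_f_R0 f n.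
Proof.
  intros Hf Hmn. induction Hmn as [|n Hmn IH]. lra. rewrite tech5. specialize (Hf (S n)). lra.
Qed.

Lemma C_sum_le n m : (m <= n)%nat -> sum_f_R0 (fun j => C n j) m <= 2 ^ n.
Proof.
  intros H. replace (2 ^ n) with ((1 + 1) ^ n) by (f_equal; ring).
  rewrite binomial.
  apply Rle_trans with (sum_f_R0 (fun j => C n j) n).
  - apply sum_le_mono; auto. intros; apply C_nonneg.
  - right. apply sum_eq. intros. rewrite !pow1. ring.
Qed.

Lemma C_le n j : (j <= n)%nat -> C n j <= 2 ^ n.
Proof.
  intros H. eapply Rle_trans; [|apply (C_sum_le n j H)].
  destruct j. simpl; lra. rewrite tech5.
  assert (0 <= sum_f_R0 (fun j0 : nat => C n j0) j).
  { clear. induction j; simpl. apply C_nonneg. pose proof (C_nonneg n (S j)). lra. }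
  lra.
Qed.

Lemma sumC_bound (a : nat -> R) n m B : (m <= n)%nat ->
  (forall j, (j <= m)%nat -> Rabs (a (S j)) <= B) ->
  Rabs (sum_f_R0 (fun j => C n j * a (S j)) m) <= B * 2 ^ n.
Proof.
  intros Hmn HB. eapply Rle_trans. apply sum_f_R0_triangle.
  apply Rle_trans with (sum_f_R0 (fun j => C n j * B) m).
  - apply sum_Rle. intros j Hj. rewrite Rabs_mult, (Rabs_pos_eq (C n j)) by apply C_nonneg.
    apply Rmult_le_compat_l. apply C_nonneg. auto.
  - rewrite <- scal_sum.
    assert (0 <= B). { specialize (HB 0%nat ltac:(lia)). pose proof (Rabs_pos (a 1%nat)). lra. }
    apply Rmult_le_compat_l; auto. apply C_sum_le; auto.
Qed.

Lemma coefD_bound a c M0 R1 m : 0 <= M0 -> 1 <= R1 ->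
  (forall k, Rabs (a k) <= M0 * R1 ^ k) ->
  Rabs (coefD a c m) <= (2 * M0 * R1 ^ 2 * (Rabs c + 5)) * (2 * R1) ^ m.
Proof.
  intros HM HR Ha.
  set (B := M0 * R1 ^ (S (S m))).
  assert (HB : forall j, (j <= S m)%nat -> Rabs (a (S j)) <= B).
  { intros j Hj. eapply Rle_trans. apply Ha. unfold B. apply Rmult_le_compat_l; auto.
    apply Rle_pow; auto. lia. }
  assert (H1 := sumC_bound a (S m) m B ltac:(lia) (fun j Hj => HB j ltac:(lia))).
  assert (H2 := sumC_bound a (S (S m)) m B ltac:(lia) (fun j Hj => HB j ltac:(lia))).
  assert (H3 := HB (S m) ltac:(lia)).
  assert (HC := C_le (S (S m)) (S m) ltac:(lia)).
  assert (HC0 := C_nonneg (S (S m)) (S m)).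
  assert (H0B : 0 <= B) by (unfold B; apply Rmult_le_pos; auto; apply pow_le; lra).
  assert (Hp : 1 <= 2 ^ S m) by (apply pow_R1_Rle; lra).
  unfold coefD.
  set (S1 := sum_f_R0 (fun j => C (S m) j * a (S j)) m) in *.
  set (S2 := sum_f_R0 (fun j => C (S (S m)) j * a (S j)) m) in *.
  set (Cm := C (S (S m)) (S m)) in *.
  assert (E2 : 2 ^ S (S m) = 2 * 2 ^ S m) by reflexivity.
  rewrite E2 in *.
  assert (T3 : Rabs ((Cm - 1) * a (S (S m))) <= (2 * 2 ^ S m + 1) * B).
  { rewrite Rabs_mult. apply Rmult_le_compat; try apply Rabs_pos; auto.
    apply Rabs_le; split; lra. }
  apply Rle_trans with (Rabs c * (B * 2 ^ S m) + B * (2 * 2 ^ S m) + (2 * 2 ^ S m + 1) * B).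
  - eapply Rle_trans. apply Rabs_triang. rewrite Rabs_Ropp.
    eapply Rle_trans. apply Rplus_le_compat_l. apply Rabs_triang.
    rewrite Rabs_mult. 
    assert (Rabs c * Rabs S1 <= Rabs c * (B * 2 ^ S m)) by (apply Rmult_le_compat_l; auto; apply Rabs_pos).
    lra.
  - replace ((2 * M0 * R1 ^ 2 * (Rabs c + 5)) * (2 * R1) ^ m) with ((Rabs c + 5) * B * 2 ^ S m).
    + assert (0 <= Rabs c) by apply Rabs_pos. nra.
    + unfold B. rewrite Rpow_mult_distr. simpl. ring.
Qed.

Lemma part1b (a : nat -> R) (rho c : R) :
    0 < rho ->
    (forall x, Rabs x < rho -> exists l, Pser a x l) ->
    (forall eps, eps > 0 -> exists M, forall y, y > M ->
       Rabs (Ffun a c y - a 0%nat) < eps).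
Proof.
  intros Hrho Hconv eps He.
  set (r0 := rho / 2).
  destruct (Hconv r0 ltac:(unfold r0; rewrite Rabs_pos_eq; lra)) as [g0 Hg0].
  destruct (bound_coef a r0 g0 ltac:(unfold r0; lra) Hg0) as [M0 HM0].
  assert (HM0p : 0 <= M0).
  { specialize (HM0 0%nat). pose proof (Rabs_pos (a 0%nat)). simpl in HM0. lra. }
  set (R1 := Rmax 1 (/ r0)).
  assert (HR1 : 1 <= R1) by apply Rmax_l.
  assert (Ha : forall k, Rabs (a k) <= M0 * R1 ^ k).
  { intros k. assert (Hr0 : 0 < r0) by (unfold r0; lra).
    replace (Rabs (a k)) with (Rabs (a k) * r0 ^ k * (/ r0) ^ k).
    2:{ rewrite Rmult_assoc, <- Rpow_mult_distr, Rinv_r, pow1 by lra. ring. }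
    apply Rmult_le_compat; auto.
    - apply Rmult_le_pos. apply Rabs_pos. apply pow_le; lra.
    - apply pow_le. left; apply Rinv_0_lt_compat; lra.
    - apply pow_incr. split. left; apply Rinv_0_lt_compat; lra. apply Rmax_r. }
  set (K := 2 * M0 * R1 ^ 2 * (Rabs c + 5)).
  set (Q := 2 * R1).
  assert (HK : 0 <= K).
  { unfold K. assert (0 <= Rabs c) by apply Rabs_pos.
    apply Rmult_le_pos. apply Rmult_le_pos. lra. apply pow_le; lra. lra. }
  assert (Hcb : forall m, Rabs (coefD a c m) <= K * Q ^ m).
  { intros m. apply coefD_bound; auto. }
  exists (2 + Rmax 1 (/ rho) + 2 * Q + 2 * K / eps + Rabs c).
  intros y Hy.
  assert (HKe : 0 <= 2 * K / eps) by (apply Rmult_le_pos; [lra| left; apply Rinv_0_lt_compat; lra]).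
  assert (Hc1 := Rle_abs (- c)). rewrite Rabs_Ropp in Hc1.
  assert (Hm1 := Rmax_l 1 (/ rho)).
  assert (HQ : 2 <= Q) by (unfold Q; lra).
  assert (Hz1 : y + c > 1 + Rmax 1 (/ rho)) by lra.
  assert (Hz : 2 * Q + 2 * K / eps + 2 <= y + c) by lra.
  set (z := y + c) in *.
  assert (Hser := part1a a rho c Hrho Hconv y Hz1). fold z in Hser.
  set (u := / z).
  assert (Hu : 0 < u) by (apply Rinv_0_lt_compat; lra).
  assert (HQu : Q * u <= 1 / 2).
  { unfold u. apply Rmult_le_reg_r with z. lra. rewrite Rmult_assoc, Rinv_l by lra. lra. }
  assert (Hpart : forall N, Rabs (sum_f_R0 (fun m => coefD a c m / z ^ S (S m)) N) <= 2 * K * u ^ 2).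
  { intros N. eapply Rle_trans. apply sum_f_R0_triangle.
    apply Rle_trans with (sum_f_R0 (fun m => (K * u ^ 2) * (Q * u) ^ m) N).
    - apply sum_Rle. intros m _. unfold Rdiv. rewrite Rabs_mult, <- pow_inv. fold u.
      rewrite (Rabs_pos_eq (u ^ _)) by (apply pow_le; lra).
      replace (K * u ^ 2 * (Q * u) ^ m) with (K * Q ^ m * u ^ S (S m)).
      + apply Rmult_le_compat_r. apply pow_le; lra. auto.
      + rewrite Rpow_mult_distr. simpl. ring.
    - replace (sum_f_R0 (fun m => (K * u ^ 2) * (Q * u) ^ m) N)
        with (K * u ^ 2 * sum_f_R0 (fun m => (Q * u) ^ m) N)
        by (rewrite scal_sum; apply sum_eq; intros; ring).
      rewrite tech3 by lra.
      assert (0 <= (Q * u) ^ S N) by (apply pow_le; nra).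
      assert (0 <= K * u ^ 2) by (apply Rmult_le_pos; auto; apply pow_le; lra).
      apply Rle_trans with (K * u ^ 2 * 2).
      + apply Rmult_le_compat_l; auto.
        apply Rmult_le_reg_r with (1 - Q * u). lra.
        unfold Rdiv. rewrite Rmult_assoc, Rinv_l by lra. lra.
      + lra. }
  assert (Hlim : Rabs (Ffun a c y - a 0%nat) <= 2 * K * u ^ 2).
  { apply (Rle_cv_lim (Un := fun N => Rabs (sum_f_R0 (fun m => coefD a c m / z ^ S (S m)) N))
                      (Vn := fun _ => 2 * K * u ^ 2)); auto.
    - apply cv_cvabs. exact Hser.
    - apply cv_const. }
  eapply Rle_lt_trans. exact Hlim.
  assert (Hu1 : u < 1) by (unfold u; apply Rmult_lt_reg_r with z; [lra| rewrite Rinv_l by lra; lra]).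
  assert (2 * K * u ^ 2 <= 2 * K * u).
  { apply Rmult_le_compat_l. lra. simpl. rewrite Rmult_1_r. nra. }
  assert (2 * K * u < eps).
  { unfold u. apply Rmult_lt_reg_r with z. lra. rewrite Rmult_assoc, Rinv_l by lra.
    assert (2 * K / eps * eps = 2 * K) by (field; lra).
    assert (2 * K / eps < z) by lra. nra. }
  lra.
Qed.


Lemma ln_le1 s : 0 < s -> ln s <= s - 1.
Proof. intros Hs. pose proof (exp_ineq1_le (ln s)). rewrite exp_ln in H; lra. Qed.

Definition phi2 (x : R) := x * ln (1 + / x).

Lemma ln_bounds x : 0 < x -> / (x + 1) <= ln (1 + / x) <= / x.
Proof.
  intros Hx. split.
  - assert (Hp : 0 < x / (x+1)) by (apply Rdiv_lt_0_compat; lra).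
    pose proof (ln_le1 _ Hp).
    assert (E : ln (x / (x+1)) = - ln (1 + / x)).
    { rewrite <- ln_Rinv. f_equal. field. lra. 
      assert (0 < /x) by (apply Rinv_0_lt_compat; lra). lra. }
    rewrite E in H.
    assert (x/(x+1) - 1 = - / (x+1)) by (field; lra). lra.
  - assert (0 < /x) by (apply Rinv_0_lt_compat; lra).
    pose proof (ln_le1 (1 + /x)). lra.
Qed.

Lemma phi2_bounds x : 0 < x -> x / (x+1) <= phi2 x <= 1.
Proof.
  intros Hx. pose proof (ln_bounds x Hx). unfold phi2. split.
  - replace (x / (x+1)) with (x * / (x+1)) by (unfold Rdiv; ring).
    apply Rmult_le_compat_l; lra.
  - apply Rle_trans with (x * / x). apply Rmult_le_compat_l; lra.
    right; field; lra.
Qed.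

Lemma phi2_deriv x : 0 < x -> derivable_pt_lim phi2 x (ln (1 + /x) - / (x+1)).
Proof.
  intros Hx. apply is_derive_Reals. unfold phi2.
  assert (0 < / x) by (apply Rinv_0_lt_compat; lra).
  auto_derive.
  - repeat split; lra.
  - field. split; lra.
Qed.

Lemma phi2_diff x : 1 < x -> 0 <= phi2 x - phi2 (x - 1) <= / ((x - 1) * x).
Proof.
  intros Hx.
  destruct (MVT_cor2 phi2 (fun t => ln (1 + /t) - / (t+1)) (x-1) x) as [t [Ht Htr]].
  - lra.
  - intros t Ht. apply phi2_deriv; lra.
  - rewrite Ht. replace (x - (x-1)) with 1 by ring. rewrite Rmult_1_r.
    assert (Ht0 : 0 < t) by lra.
    pose proof (ln_bounds t Ht0). split. lra.
    assert (/ t - / (t+1) <= / ((x-1)*x)).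
    { replace (/ t - / (t+1)) with (/ (t * (t+1))) by (field; lra).
      apply Rinv_le_contravar. apply Rmult_lt_0_compat; lra.
      apply Rmult_le_compat; lra. }
    lra.
Qed.

Lemma exp_diff a b : b <= a -> 0 <= exp a - exp b <= exp a * (a - b).
Proof.
  intros H. split.
  - destruct (Req_dec a b). subst; lra. pose proof (exp_increasing b a). lra.
  - pose proof (exp_ineq1_le (b - a)).
    replace (exp b) with (exp a * exp (b - a)).
    2:{ rewrite <- exp_plus. f_equal; ring. }
    pose proof (exp_pos a). nra.
Qed.

Lemma part2 (c : R) :
    Un_cv (fun n : nat =>
      (INR n + 1) * Rpower (1 + / (INR n + c)) (INR n + c)
      - INR n * Rpower (1 + / (INR n + c - 1)) (INR n + c - 1))
    (exp 1).
Proof.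
  intros eps Heps.
  assert (He3 : exp 1 <= 3) by apply exp_le_3.
  destruct (archimed (18 / eps + 2 * Rabs c + 5)) as [Harch _].
  set (N := Z.to_nat (up (18 / eps + 2 * Rabs c + 5))).
  exists N. intros n Hn.
  assert (HN : 18 / eps + 2 * Rabs c + 5 < INR n).
  { apply Rlt_le_trans with (IZR (up (18 / eps + 2 * Rabs c + 5))). lra.
    apply Rle_trans with (INR N). unfold N. rewrite INR_IZR_INZ. rewrite Z2Nat.id. lra.
    apply le_0_IZR. assert (0 <= 18/eps). apply Rlt_le, Rdiv_lt_0_compat; lra.
    pose proof (Rabs_pos c). lra.
    apply le_INR. exact Hn. }
  assert (Hc := Rabs_pos c). assert (Hc1 := Rle_abs c). assert (Hc2 := Rle_abs (-c)).
  rewrite Rabs_Ropp in Hc2.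
  set (nn := INR n) in *. set (x := nn + c).
  assert (Hx1 : nn / 2 + 1 <= x - 1).
  { assert (0 <= 18/eps). apply Rlt_le, Rdiv_lt_0_compat; lra. unfold x; lra. }
  assert (Hnpos : 3 < nn) by (assert (0 <= 18/eps) by (apply Rlt_le, Rdiv_lt_0_compat; lra); lra).
  unfold Rpower. fold x. replace (nn + c - 1) with (x - 1) by (unfold x; ring).
  change ((x) * ln (1 + / x)) with (phi2 x). change ((x-1) * ln (1 + / (x-1))) with (phi2 (x-1)).
  assert (Hd := phi2_diff x ltac:(lra)).
  assert (Hb := phi2_bounds x ltac:(lra)).
  assert (Hed := exp_diff (phi2 x) (phi2 (x-1)) ltac:(lra)).
  assert (Hmon : exp (phi2 x) <= exp 1).
  { destruct (Req_dec (phi2 x) 1) as [E|E]. rewrite E; lra. left; apply exp_increasing; lra. }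
  assert (Hlow : exp 1 * (1 - / (x+1)) <= exp (phi2 x)).
  { assert (x / (x+1) = 1 + - / (x+1)) by (field; lra).
    assert (exp (x/(x+1)) <= exp (phi2 x)).
    { destruct (Req_dec (x/(x+1)) (phi2 x)) as [E|E]. rewrite E; lra. left; apply exp_increasing; lra. }
    rewrite H in H0. rewrite exp_plus in H0. pose proof (exp_ineq1_le (- / (x+1))).
    pose proof (exp_pos 1). nra. }
  unfold R_dist.
  set (A := exp (phi2 x)) in *. set (B := exp (phi2 (x-1))) in *.
  replace ((nn + 1) * A - nn * B - exp 1) with ((A - exp 1) + nn * (A - B)) by ring.
  assert (Hi : / (x+1) <= 2 / nn).
  { replace (2 / nn) with (/ (nn/2)) by (field; lra). apply Rinv_le_contravar; lra. }
  assert (T1 : exp 1 * / (x+1) <= 6 / nn).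
  { replace (6 / nn) with (3 * (2 / nn)) by (field; lra).
    apply Rmult_le_compat; try lra. pose proof (exp_pos 1); lra.
    left; apply Rinv_0_lt_compat; lra. }
  assert (Hi2 : / ((x-1)*x) <= 4 / (nn * nn)).
  { replace (4 / (nn*nn)) with (/ ((nn/2)*(nn/2))) by (field; lra).
    apply Rinv_le_contravar. apply Rmult_lt_0_compat; lra. apply Rmult_le_compat; lra. }
  assert (T2 : nn * (A - B) <= 12 / nn).
  { assert (A - B <= 3 * (4 / (nn*nn))).
    { apply Rle_trans with (A * (phi2 x - phi2 (x-1))). lra.
      apply Rmult_le_compat; try lra. unfold A; pose proof (exp_pos (phi2 x)); lra. }
    apply Rle_trans with (nn * (3 * (4 / (nn * nn)))).
    apply Rmult_le_compat_l; lra. right; field; lra. }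
  assert (T3 : 18 / nn < eps).
  { assert (18 / eps * eps = 18) by (field; lra).
    assert (18 < nn * eps).
    { assert (0 <= 18 / eps) by (apply Rlt_le, Rdiv_lt_0_compat; lra). nra. }
    apply Rmult_lt_reg_r with nn. lra. replace (18 / nn * nn) with 18 by (field; lra). lra. }
  assert (0 <= nn * (A - B)) by (apply Rmult_le_pos; lra).
  assert (6/nn + 12/nn = 18/nn) by (field; lra).
  apply Rabs_def1; lra.
Qed.


Theorem mainTheorem5 :
  (forall (a : nat -> R) (rho c : R),
    0 < rho ->
    (forall x, Rabs x < rho -> exists l, Pser a x l) ->
    (forall y, y + c > 1 + Rmax 1 (/ rho) ->
       infinite_sum (fun m => coefD a c m / (y + c) ^ (S (S m)))
                    (Ffun a c y - a 0%nat))
    /\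
    (forall eps, eps > 0 -> exists M, forall y, y > M ->
       Rabs (Ffun a c y - a 0%nat) < eps))
  /\
  (forall c : R,
    Un_cv (fun n : nat =>
      (INR n + 1) * Rpower (1 + / (INR n + c)) (INR n + c)
      - INR n * Rpower (1 + / (INR n + c - 1)) (INR n + c - 1))
    (exp 1)).
Proof.
  split.
  - intros a rho c Hrho Hconv. split.
    + apply (part1a a rho c); auto.
    + apply (part1b a rho c); auto.
  - exact part2.
Qed.
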